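(* Let $\mu,\sigma$ be non-uniformly stable matchings in $G$ and let $F=(\mu\setminus\sigma)\cup(\sigma\setminus\mu)$. Let $(v_1,\dots,v_{k+1})$ be a cycle in $F$ (i.e., $v_1,\dots,v_k$ distinct, $v_{k+1}=v_1$, and $e_\ell:=\{v_\ell,v_{\ell+1}\}\in F$ for all $\ell\in[k]$), and set $e_0:=e_k$. Then one of the following holds: (C1) $e_\ell\succ_{v_\ell}e_{\ell-1}$ for every $\ell\in[k]$; (C2) $e_{\ell-1}\succ_{v_\ell}e_\ell$ for every $\ell\in[k]$; (C3) $e_\ell\sim_{v_\ell}e_{\ell-1}$ for every $\ell\in[k]$.
   Context: Setting: $G=(V,E)$ is a finite simple bipartite graph with $V=V_1\sqcup V_2$, every edge joining a vertex of $V_1$ to a vertex of $V_2$; an edge is identified with the set of its two endpoints. $E$ is partitioned into $E_1,E_2$. For $F\subseteq E$ and $v\in V$, $F(v)$ is the set of edges of $F$ incident to $v$. For every $v\in V$ there is a transitive and complete binary relation $\succsim_v$ on $E(v)\cup\{\emptyset\}$ with $e\succsim_v\emptyset$ and $\emptyset\not\succsim_v e$ for all $e\in E(v)$; $e\succ_v f$ means $e\succsim_v f$ and $f\not\succsim_v e$; $e\sim_v f$ means both $e\succsim_v f$ and $f\succsim_v e$. A matching is $\mu\subseteq E$ with $|\mu(v)|\le1$ for all $v$; $\mu(v)$ denotes the edge of $\mu$ at $v$, or $\emptyset$. An edge $e\in E\setminus\mu$ weakly blocks $\mu$ if $e\succsim_v\mu(v)$ for every $v\in e$; it strongly blocks $\mu$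 if additionally $e\succ_w\mu(w)$ for some $w\in e$. $\mu$ is non-uniformly stable if no edge of $E_1\setminus\mu$ weakly blocks $\mu$ and no edge of $E_2\setminus\mu$ strongly blocks $\mu$. $[k]=\{1,\dots,k\}$. *)

(* Defs.v *)
From mathcomp Require Import all_boot.
Set Implicit Arguments. Unset Strict Implicit. Unset Printing Implicit Defensive.

Section Defs.
Variable V : finType.

(* Edges are 2-element vertex sets; the empty "edge" (unmatched) is set0. *)

Definition bipartite_graph (side : pred V) (E : {set {set V}}) : Prop :=
  forall e, e \in E -> exists x y, [/\ e = [set x; y], side x & ~~ side y].

Definition inc (F : {set {set V}}) (v : V) : {set {set V}} :=
  [set e in F | v \in e].

Definition pdom (E : {set {set V}}) (v : V) (e : {set V}) : bool :=
  (e \in inc E v) || (e == set0).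

Definition pref_ok (E : {set {set V}}) (pref : V -> {set V} -> {set V} -> bool) :
  Prop :=
  forall v,
    [/\ (forall a b c, pdom E v a -> pdom E v b -> pdom E v c ->
           pref v a b -> pref v b c -> pref v a c),
        (forall a b, pdom E v a -> pdom E v b -> pref v a b || pref v b a)
      & (forall e, e \in inc E v -> pref v e set0 && ~~ pref v set0 e)].

Definition spref (pref : V -> {set V} -> {set V} -> bool) v a b :=
  pref v a b && ~~ pref v b a.
Definition ipref (pref : V -> {set V} -> {set V} -> bool) v a b :=
  pref v a b && pref v b a.

Definition is_matching (E mu : {set {set V}}) : Prop :=
  mu \subset E /\ forall v, #|inc mu v| <= 1.

Definition medge (mu : {set {set V}}) (v : V) : {set V} :=
  if [pick e in inc mu v] is Some e then e else set0.

Definition weakly_blocks (pref : V -> {set V} -> {set V} -> bool)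
  (mu : {set {set V}}) (e : {set V}) : Prop :=
  e \notin mu /\ forall v, v \in e -> pref v e (medge mu v).

Definition strongly_blocks (pref : V -> {set V} -> {set V} -> bool)
  (mu : {set {set V}}) (e : {set V}) : Prop :=
  weakly_blocks pref mu e /\ exists2 w, w \in e & spref pref w e (medge mu w).

Definition nu_stable (E E1 : {set {set V}}) (pref : V -> {set V} -> {set V} -> bool)
  (mu : {set {set V}}) : Prop :=
  [/\ is_matching E mu,
      (forall e, e \in E1 -> ~ weakly_blocks pref mu e)
    & (forall e, e \in E :\: E1 -> ~ strongly_blocks pref mu e)].

End Defs.

(* Main.v *)
Require Import Defs.
From mathcomp Require Import all_boot zify.
Set Implicit Arguments.

Lemma card1_eq (V : finType) (A : {set {set V}}) (w : V) (x y : {set V}) :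
  #|inc A w| <= 1 -> x \in A -> w \in x -> y \in A -> w \in y -> x = y.
Proof.
move=> /card_le1_eqP H xA wx yA wy.
apply: H; by rewrite inE ?xA ?yA ?wx ?wy.
Qed.

Lemma alt (V : finType) (A B : {set {set V}}) (w : V) (x y : {set V}) :
  #|inc A w| <= 1 -> w \in x -> w \in y -> x != y ->
  y \in (A:\:B):|:(B:\:A) -> x \in A:\:B -> y \in B.
Proof.
move=> H wx wy nxy; rewrite !inE => /orP[/andP[yB yA]|/andP[_ ->]] // /andP[_ xA].
by rewrite (card1_eq H xA wx yA wy) eqxx in nxy.
Qed.

Lemma medgeE (V : finType) (A : {set {set V}}) (w : V) (x : {set V}) :
  #|inc A w| <= 1 -> x \in A -> w \in x -> medge A w = x.
Proof.
move=> H xA wx; rewrite /medge; case: pickP => [y|/(_ x)].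
  rewrite inE => /andP[yA wy]; exact: (card1_eq H yA wy xA wx).
by rewrite inE xA wx.
Qed.

Lemma cyc_fwd (k : nat) (S : nat -> Prop) :
  (forall l, 1 <= l < k -> S l -> S l.+1) -> (S k -> S 1) ->
  forall l0, 1 <= l0 <= k -> S l0 -> forall m, 1 <= m <= k -> S m.
Proof.
move=> Hs Hk l0 Hl0 S0.
have H1 : forall d, l0 + d <= k -> S (l0 + d).
  elim=> [|d IH] Hd; first by rewrite addn0.
  rewrite addnS; apply: Hs; first lia. apply: IH; lia.
have Sk : S k.
  have := H1 (k - l0). have -> : l0 + (k - l0) = k by lia. apply; lia.
have S1 := Hk Sk.
have H2 : forall d, 1 + d <= k -> S (1 + d).
  elim=> [|d IH] Hd; first by rewrite addn0.
  rewrite addnS; apply: Hs; first lia. apply: IH; lia.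
move=> m Hm; have := H2 (m - 1); have -> : 1 + (m - 1) = m by lia. apply; lia.
Qed.

Lemma cyc_bwd (k : nat) (S : nat -> Prop) :
  (forall l, 1 <= l < k -> S l.+1 -> S l) -> (S 1 -> S k) ->
  forall l0, 1 <= l0 <= k -> S l0 -> forall m, 1 <= m <= k -> S m.
Proof.
move=> Hs Hk l0 Hl0 S0 m Hm.
have H := @cyc_fwd k (fun j => S (k.+1 - j)).
have -> : m = k.+1 - (k.+1 - m) by lia.
apply: (H _ _ (k.+1 - l0)); last lia.
- move=> l Hl /=. have -> : k.+1 - l = (k.+1 - l.+1).+1 by lia. apply: Hs; lia.
- rewrite /= subSnn. have -> : k.+1 - 1 = k by lia. exact: Hk.
- lia.
- by have -> : k.+1 - (k.+1 - l0) = l0 by lia.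
Qed.

Theorem lemma5p2 (V : finType) (side : pred V) (E E1 : {set {set V}})
  (pref : V -> {set V} -> {set V} -> bool)
  (HG : bipartite_graph side E) (HE1 : E1 \subset E) (Hpref : pref_ok E pref)
  (mu sigma : {set {set V}})
  (Hmu : nu_stable E E1 pref mu) (Hsigma : nu_stable E E1 pref sigma)
  (k : nat) (v : nat -> V)
  (Hdist : forall i j, 1 <= i <= k -> 1 <= j <= k -> v i = v j -> i = j)
  (Hclose : v k.+1 = v 1)
  (Hedges : forall l, 1 <= l <= k ->
     [set v l; v l.+1] \in (mu :\: sigma) :|: (sigma :\: mu)) :
  let e := fun l : nat => if l == 0 then [set v k; v k.+1] else [set v l; v l.+1] in
  (forall l, 1 <= l <= k -> spref pref (v l) (e l) (e l.-1)) \/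
  (forall l, 1 <= l <= k -> spref pref (v l) (e l.-1) (e l)) \/
  (forall l, 1 <= l <= k -> ipref pref (v l) (e l) (e l.-1)).

Proof.
move=> e.
set F := (mu :\: sigma) :|: (sigma :\: mu).
have e0 : e 0 = [set v k; v k.+1] by [].
have eS : forall l, e l.+1 = [set v l.+1; v l.+2] by [].
have ek : e k = [set v k; v k.+1] by rewrite /e; case: ifP.
pose nxt l := if l == k then 1 else l.+1.
pose prv l := if l == 1 then k else l.-1.
have Hnxt : forall l, 1 <= l <= k -> 1 <= nxt l <= k.
  move=> l Hl; rewrite /nxt; case: (l =P k) => H; lia.
have Hprv : forall l, 1 <= l <= k -> 1 <= prv l <= k.
  move=> l Hl; rewrite /prv; case: (l =P 1) => H; lia.
have eN : forall l, 1 <= l <= k -> e l = [set v l; v (nxt l)].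
  move=> [|l] // Hl; rewrite eS /nxt; case: (l.+1 =P k) => [Ek|_] //.
  by rewrite -Hclose -Ek.
have eP : forall l, 1 <= l <= k -> e l.-1 = [set v (prv l); v l].
  move=> [|l] // Hl; rewrite /prv /=.
  case: l Hl => [|l] Hl /=; first by rewrite e0 Hclose.
  by rewrite eS.
have eNP : forall l, 1 <= l <= k -> e (nxt l).-1 = e l.
  move=> l Hl; rewrite /nxt; case: (l =P k) => [El|_] //=.
  by rewrite e0 El ek.
have eF : forall l, 1 <= l <= k -> e l \in F.
  move=> [|l] // Hl; exact: Hedges.
have ePF : forall l, 1 <= l <= k -> e l.-1 \in F.
  move=> [|[|l]] // Hl; last by apply: Hedges; lia.
  rewrite /= e0; apply: Hedges; lia.
have vin1 : forall l, 1 <= l <= k -> v l \in e l.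
  by move=> l Hl; rewrite eN // set21.
have vin2 : forall l, 1 <= l <= k -> v l \in e l.-1.
  by move=> l Hl; rewrite eP // set22.
have vin3 : forall l, 1 <= l <= k -> v (nxt l) \in e l.
  by move=> l Hl; rewrite eN // set22.
have FE : forall x, x \in F -> x \in E.
  case: Hmu => [[smu _] _ _]; case: Hsigma => [[ssig _] _ _].
  move=> x; rewrite !inE => /orP[/andP[_ xA]|/andP[_ xA]].
  - exact: (subsetP smu).
  - exact: (subsetP ssig).
pose P l := pref (v l) (e l) (e l.-1).
pose Q l := pref (v l) (e l.-1) (e l).
have comp : forall l, 1 <= l <= k -> P l || Q l.
  move=> l Hl; case: (Hpref (v l)) => _ Hc _; apply: Hc.
  - by rewrite /pdom !inE FE ?eF ?vin1.
  - by rewrite /pdom !inE FE ?ePF ?vin2.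
case: (leqP k 2) => Hk.
  right; right => l Hl.
  have Hee : e l.-1 = e l.
    rewrite eP // eN // setUC.
    have -> : prv l = nxt l by rewrite /prv /nxt; case: (l =P 1); case: (l =P k); lia.
    by [].
  by have := comp l Hl; rewrite /P /Q /ipref Hee orbb => ->.
have D : forall l, 1 <= l <= k -> e l.-1 != e l.
  move=> l Hl; rewrite eP // eN //; apply/eqP => H.
  have : v (nxt l) \in [set v (prv l); v l] by rewrite H set22.
  rewrite !inE => /orP[/eqP|/eqP] /Hdist.
  - move=> /(_ (Hnxt l Hl) (Hprv l Hl)); rewrite /nxt /prv.
    case: (l =P 1); case: (l =P k); lia.
  - move=> /(_ (Hnxt l Hl) Hl); rewrite /nxt.
    case: (l =P k); lia.
have key : forall A B, is_matching E A -> nu_stable E E1 pref B ->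
    F = (A :\: B) :|: (B :\: A) ->
    forall l, 1 <= l <= k -> e l \in A :\: B -> P l -> Q (nxt l) ->
    Q l && P (nxt l).
  move=> A B HA HB HF l Hl elAB Pl Qn.
  have Hl' := Hnxt l Hl.
  have cardA : forall w, #|inc A w| <= 1 by case: HA.
  have cardB : forall w, #|inc B w| <= 1 by case: HB => -[].
  have Bp : e l.-1 \in B.
    apply: (alt (cardA (v l)) (vin1 l Hl) (vin2 l Hl)) => //.
    - by rewrite eq_sym D.
    - by rewrite -HF ePF.
  set l' := nxt l.
  have Hl'E : e l'.-1 = e l := eNP l Hl.
  have Bn : e l' \in B.
    apply: (alt (cardA (v l')) (vin3 l Hl) (vin1 l' Hl')) => //.
    - by rewrite -Hl'E D.
    - by rewrite -HF eF.
  have m1 : medge B (v l) = e l.-1 := medgeE (cardB _) Bp (vin2 l Hl).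
  have m2 : medge B (v l') = e l' := medgeE (cardB _) Bn (vin1 l' Hl').
  have nB : e l \notin B by move: elAB; rewrite inE => /andP[].
  have eE : e l \in E by apply: FE; rewrite eF.
  have wb : weakly_blocks pref B (e l).
    split=> // w; rewrite {1}eN // => /set2P[->|->].
    - by rewrite m1.
    - by rewrite m2 -Hl'E.
  case: HB => _ HB1 HB2.
  case: (boolP (e l \in E1)) => HE1l; first by case: (HB1 _ HE1l).
  have HE2 : e l \in E :\: E1 by rewrite inE HE1l eE.
  apply/negPn/negP => nQP; apply: (HB2 _ HE2); split=> //.
  move: nQP; rewrite negb_and => /orP[nQ|nP].
  - exists (v l); first exact: vin1.
    by rewrite /spref m1; apply/andP; split.
  - exists (v l'); first exact: vin3.
    by rewrite /spref m2 -Hl'E; apply/andP; split.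
have C : forall l, 1 <= l <= k -> P l -> Q (nxt l) -> Q l && P (nxt l).
  move=> l Hl; have := eF l Hl; rewrite {1}/F inE => /orP[H|H].
  - exact: (key mu sigma (let: And3 x _ _ := Hmu in x) Hsigma erefl).
  - by apply: (key sigma mu (let: And3 x _ _ := Hsigma in x) Hmu) => //; rewrite /F setUC.
have nxtS : forall l, 1 <= l < k -> nxt l = l.+1.
  by move=> l Hl; rewrite /nxt; case: (l =P k) => H //; lia.
have nxtk : nxt k = 1 by rewrite /nxt eqxx.
case: (pickP (fun l : 'I_k.+1 => (1 <= l) && (P l && ~~ Q l))) => [l0|noP].
  case/andP => l0p S0; left => m Hm.
  have Hl0 : 1 <= l0 <= k by rewrite l0p -ltnS ltn_ord.
  have step : forall l, 1 <= l <= k -> P l && ~~ Q l -> P (nxt l) && ~~ Q (nxt l).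
    move=> l Hl /andP[Pl nQl].
    have nQn : ~~ Q (nxt l) by apply/negP => Qn; case/andP: (C l Hl Pl Qn) => Ql _; rewrite Ql in nQl.
    by have := comp _ (Hnxt l Hl); rewrite (negbTE nQn) orbF => ->.
  apply: (@cyc_fwd k (fun l => P l && ~~ Q l) _ _ l0 Hl0 S0 m Hm).
  - move=> l Hl; rewrite -nxtS //; apply: step; lia.
  - by rewrite -nxtk; apply: step; lia.
case: (pickP (fun l : 'I_k.+1 => (1 <= l) && (Q l && ~~ P l))) => [l0|noQ].
  case/andP => l0p S0; right; left => m Hm.
  have Hl0 : 1 <= l0 <= k by rewrite l0p -ltnS ltn_ord.
  have step : forall l, 1 <= l <= k -> Q (nxt l) && ~~ P (nxt l) -> Q l && ~~ P l.
    move=> l Hl /andP[Qn nPn].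
    have nPl : ~~ P l by apply/negP => Pl; case/andP: (C l Hl Pl Qn) => _ Pn; rewrite Pn in nPn.
    by have := comp _ Hl; rewrite (negbTE nPl) /= => ->.
  apply: (@cyc_bwd k (fun l => Q l && ~~ P l) _ _ l0 Hl0 S0 m Hm).
  - move=> l Hl; rewrite -nxtS //; apply: step; lia.
  - by rewrite -nxtk; apply: step; lia.
right; right => l Hl.
have lk : l < k.+1 by lia.
have := noP (Ordinal lk); have := noQ (Ordinal lk); rewrite /= (proj1 (andP Hl)) /=.
have := comp l Hl; rewrite /ipref /P /Q.
by case: (pref _ _ _); case: (pref _ _ _).
Qed.
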